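(* Stutter-equivalence of teams has the following properties: (1) If $T$ is a stutter-free team, then $T=T[f]$ for every stuttering function $f$ of $T$. (2) For every team $T$ there is a unique stutter-free team that is stutter-equivalent to $T$. (3) Stutter-equivalence $\equiv_{\mathrm{st}}$ is reflexive, symmetric and transitive on teams. (4) Every $\equiv_{\mathrm{st}}$-equivalence class contains exactly one stutter-free team.
   Context: A trace is an infinite sequence $t=t(0)t(1)\cdots$ of subsets of a set $\mathrm{AP}$ of propositions; a team is a set of traces. A stuttering function of a trace $t$ is a strictly increasing function $f:\mathbb N\to\mathbb N$ with $f(0)=0$ such that $t(f(k))=t(f(k)+1)=\cdots=t(f(k+1)-1)$ for all $k\ge0$. A stuttering function of a team $T$ is a function that is a stuttering function of every $t\in T$. For $f:\mathbb N\to\mathbb N$, $t[f]:=t(f(0))t(f(1))t(f(2))\cdots$ and $T[f]:=\{t[f]:t\in T\}$. Teams $T,T'$ are stutter-equivalent ($T\equiv_{\mathrm{st}}T'$) if there are a stuttering function $f$ of $T$ and a stuttering function $f'$ of $T'$ with $T[f]=T'[f']$. A team $T$ has a stuttering position $i$ if $t(i)=t(i+1)$ for all $t\in T$, but there exist $t\in T$ and $j>i+1$ with $t(i)\neq t(j)$. A team with no stuttering position is stutter-free. *)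

(* Defs.v *)
From Stdlib Require Import Arith.

(* A subset of AP is a predicate on AP; a trace is an infinite sequence
   of subsets of AP; a team is a set of traces. *)
Definition trace (AP : Type) := nat -> (AP -> Prop).
Definition team (AP : Type) := trace AP -> Prop.

Definition stuttering_fun {AP : Type} (t : trace AP) (f : nat -> nat) : Prop :=
  f 0 = 0 /\
  (forall m n, m < n -> f m < f n) /\
  (forall k i, f k <= i < f (S k) -> t i = t (f k)).

Definition team_stuttering_fun {AP : Type} (T : team AP) (f : nat -> nat) : Prop :=
  forall t, T t -> stuttering_fun t f.

Definition trace_sub {AP : Type} (t : trace AP) (f : nat -> nat) : trace AP :=
  fun k => t (f k).

Definition team_sub {AP : Type} (T : team AP) (f : nat -> nat) : team AP :=
  fun u => exists t, T t /\ u = trace_sub t f.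

Definition stutter_equiv {AP : Type} (T T' : team AP) : Prop :=
  exists f f', team_stuttering_fun T f /\ team_stuttering_fun T' f' /\
               team_sub T f = team_sub T' f'.

Definition stuttering_position {AP : Type} (T : team AP) (i : nat) : Prop :=
  (forall t, T t -> t i = t (S i)) /\
  (exists t j, T t /\ S i < j /\ t i <> t j).

Definition stutter_free {AP : Type} (T : team AP) : Prop :=
  forall i, ~ stuttering_position T i.

(* Main.v *)
Require Import Defs.
From Stdlib Require Import Arith Lia Classical ClassicalEpsilon FunctionalExtensionality PropExtensionality.

Lemma team_ext {AP} (T T' : team AP) : (forall u, T u <-> T' u) -> T = T'.
Proof. intros H. apply functional_extensionality; intro u. apply propositional_extensionality. apply H. Qed.

Lemma min_ex (P : nat -> Prop) : (exists n, P n) -> exists n, P n /\ forall m, m < n -> ~ P m.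
Proof.
  intros [n Hn]. revert Hn. induction n as [n IH] using lt_wf_ind. intros Hn.
  destruct (classic (exists m, m < n /\ P m)) as [[m [Hm Pm]]|Hno].
  - exact (IH m Hm Pm).
  - exists n. split; [exact Hn|]. intros m Hm Pm. apply Hno. eauto.
Qed.

Lemma smono_le (f : nat -> nat) : (forall m n, m < n -> f m < f n) -> forall m n, m <= n -> f m <= f n.
Proof. intros H m n Hmn. destruct (Nat.eq_dec m n). subst; lia. specialize (H m n ltac:(lia)); lia. Qed.

Lemma smono_ge (f : nat -> nat) : f 0 = 0 -> (forall m n, m < n -> f m < f n) -> forall k, k <= f k.
Proof. intros H0 H k. induction k. lia. specialize (H k (S k) ltac:(lia)); lia. Qed.

Lemma smono_locate (f : nat -> nat) : f 0 = 0 -> (forall m n, m < n -> f m < f n) ->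
  forall i, exists m, f m <= i < f (S m).
Proof.
  intros H0 H i.
  destruct (min_ex (fun n => i < f n)) as [n [Hn Hmin]].
  { exists (S i). pose proof (smono_ge f H0 H (S i)). lia. }
  destruct n as [|m]. rewrite H0 in Hn; lia.
  exists m. split; [|exact Hn]. apply Nat.nlt_ge. apply Hmin. lia.
Qed.

Lemma block_in {AP} (t : trace AP) f : stuttering_fun t f ->
  forall x y i, f x <= i < f y -> exists m, x <= m < y /\ t i = t (f m).
Proof.
  intros [H0 [Hm Hb]] x y i Hi.
  destruct (smono_locate f H0 Hm i) as [m Hmi].
  exists m. split; [|apply Hb; exact Hmi].
  split.
  - apply Nat.nlt_ge; intro C. pose proof (smono_le f Hm (S m) x C). lia.
  - apply Nat.nlt_ge; intro C. pose proof (smono_le f Hm y m ltac:(lia)). lia.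
Qed.

Lemma comp_stutter {AP} (T : team AP) f g :
  team_stuttering_fun T f -> team_stuttering_fun (team_sub T f) g ->
  team_stuttering_fun T (fun k => f (g k)).
Proof.
  intros Hf Hg t Ht.
  destruct (Hf t Ht) as [f0 [fm fb]].
  destruct (Hg (trace_sub t f) (ex_intro _ t (conj Ht eq_refl))) as [g0 [gm gb]].
  split; [rewrite g0; exact f0|split].
  - intros m n H; apply fm; apply gm; exact H.
  - intros k i Hi. destruct (block_in t f (Hf t Ht) (g k) (g (S k)) i Hi) as [m [Hm Hti]].
    rewrite Hti. unfold trace_sub in gb. exact (gb k m Hm).
Qed.

Lemma sub_sub {AP} (T : team AP) f g :
  team_sub (team_sub T f) g = team_sub T (fun k => f (g k)).
Proof.
  apply team_ext; intro u; split.
  - intros [v [[t [Ht ->]] ->]]. exists t. split; auto.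
  - intros [t [Ht ->]]. exists (trace_sub t f). split. exists t; auto. reflexivity.
Qed.

Lemma id_stutter {AP} (T : team AP) : team_stuttering_fun T (fun k => k).
Proof. intros t _. split; [reflexivity|split; [intros; lia|]]. intros k i Hi. assert (i = k) by lia. subst; reflexivity. Qed.

Lemma sub_id {AP} (T : team AP) : team_sub T (fun k => k) = T.
Proof. apply team_ext; intro u; split. intros [t [Ht ->]]. exact Ht. intros Hu. exists u. split; auto. Qed.

Definition constfrom {AP} (T : team AP) q := forall t, T t -> forall j, q <= j -> t j = t q.

Lemma sf_fix {AP} (T : team AP) : stutter_free T -> forall f, team_stuttering_fun T f -> T = team_sub T f.
Proof.
  intros HSF f Hf.
  assert (Key : forall t, T t -> forall k, t (f k) = t k).
  { intros t0 Ht0.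
    destruct (Hf t0 Ht0) as [f0 [fm _]].
    assert (Ind : forall k, f k = k \/ exists p, p < k /\ constfrom T p).
    { induction k as [|k IH].
      - left; exact f0.
      - destruct IH as [E|[p [Hp Hc]]].
        + destruct (Nat.eq_dec (f (S k)) (S k)) as [E'|N]. left; exact E'.
          right. exists k. split; [lia|].
          assert (Hfk : f k < f (S k)) by (apply fm; lia).
          pose proof (smono_ge f f0 fm (S k)).
          assert (A : forall t, T t -> t k = t (S k)).
          { intros t Ht. destruct (Hf t Ht) as [_ [_ fb]].
            assert (X : t (S k) = t (f k)) by (apply fb; lia). rewrite E in X. auto. }
          assert (B : forall t, T t -> forall j, S k < j -> t k = t j).
          { intros t Ht j Hj. apply NNPP. intro C. apply (HSF k). split; [exact A|]. exists t, j. auto. }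
          intros t Ht j Hj. destruct (Nat.eq_dec j k). subst; reflexivity.
          destruct (Nat.eq_dec j (S k)). subst. symmetry; apply A; auto.
          symmetry. apply B; auto; lia.
        + right. exists p. split; [lia|exact Hc]. }
    intros k. destruct (Ind k) as [E|[p [Hp Hc]]]. rewrite E; reflexivity.
    assert (p <= f k) by (pose proof (smono_ge f f0 fm k); lia).
    rewrite (Hc t0 Ht0 (f k) H), (Hc t0 Ht0 k ltac:(lia)). reflexivity. }
  apply team_ext; intro u; split.
  - intros Hu. exists u. split; [exact Hu|]. apply functional_extensionality; intro k. unfold trace_sub. symmetry; apply Key; auto.
  - intros [t [Ht ->]]. replace (trace_sub t f) with t; [exact Ht|]. apply functional_extensionality; intro k. unfold trace_sub. symmetry; apply Key; auto.
Qed.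

Lemma sf_step {AP} (T : team AP) a : team_stuttering_fun T a -> stutter_free (team_sub T a) ->
  forall k, constfrom T (a k) \/ exists t, T t /\ t (a (S k)) <> t (a k).
Proof.
  intros Ha HSF k.
  destruct (classic (exists t, T t /\ t (a (S k)) <> t (a k))) as [Ex|NEx]; [right; exact Ex|left].
  assert (A : forall t, T t -> t (a k) = t (a (S k))).
  { intros t Ht. apply NNPP; intro C. apply NEx. exists t. split; auto. }
  assert (B : forall t, T t -> forall j, S k < j -> t (a k) = t (a j)).
  { intros t Ht j Hj. apply NNPP; intro C. apply (HSF k). split.
    - intros u [t' [Ht' ->]]. unfold trace_sub. apply A; auto.
    - exists (trace_sub t a), j. split; [exists t; auto|]. split; [exact Hj|]. unfold trace_sub. exact C. }
  intros t Ht j Hj.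
  destruct (Ha t Ht) as [a0 [am ab]].
  destruct (smono_locate a a0 am j) as [m [Hm1 Hm2]].
  assert (k <= m). { apply Nat.nlt_ge; intro C. assert (a (S m) <= a k) by (apply smono_le; auto; lia). lia. }
  rewrite (ab m j (conj Hm1 Hm2)).
  destruct (Nat.eq_dec m k). subst; reflexivity.
  destruct (Nat.eq_dec m (S k)). subst. symmetry; apply A; auto.
  symmetry; apply B; auto; lia.
Qed.

Lemma red_unique {AP} (T : team AP) a b : team_stuttering_fun T a -> team_stuttering_fun T b ->
  stutter_free (team_sub T a) -> stutter_free (team_sub T b) -> team_sub T a = team_sub T b.
Proof.
  intros Ha Hb Fa Fb.
  assert (Key : forall t, T t -> forall k, t (a k) = t (b k)).
  { intros t0 Ht0.
    destruct (Ha t0 Ht0) as [a0 [am _]]. destruct (Hb t0 Ht0) as [b0 [bm _]].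
    assert (Ind : forall k, a k = b k \/ exists q, q <= a k /\ q <= b k /\ constfrom T q).
    { induction k as [|k IH].
      - left; congruence.
      - assert (a k < a (S k)) by (apply am; lia). assert (b k < b (S k)) by (apply bm; lia).
        destruct IH as [E|[q [Hq1 [Hq2 Hc]]]].
        2: { right; exists q; repeat split; try assumption; lia. }
        destruct (sf_step T a Ha Fa k) as [C|[ta [Hta Da]]].
        { right; exists (a k); repeat split; try assumption; lia. }
        destruct (sf_step T b Hb Fb k) as [C|[tb [Htb Db]]].
        { right; exists (b k); repeat split; try assumption; lia. }
        destruct (lt_eq_lt_dec (a (S k)) (b (S k))) as [[L|L]|L].
        + exfalso. apply Da. destruct (Hb ta Hta) as [_ [_ bb]]. rewrite E. apply bb. lia.
        + left; exact L.
        + exfalso. apply Db. destruct (Ha tb Htb) as [_ [_ ab]]. rewrite <- E. apply ab. lia. }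
    intros k. destruct (Ind k) as [E|[q [Hq1 [Hq2 Hc]]]]. rewrite E; reflexivity.
    rewrite (Hc t0 Ht0 (a k) Hq1), (Hc t0 Ht0 (b k) Hq2). reflexivity. }
  apply team_ext; intro u; split; intros [t [Ht ->]]; exists t; split; auto;
    apply functional_extensionality; intro k; unfold trace_sub; [|symmetry]; apply Key; auto.
Qed.

Lemma ex_next {AP} (T : team AP) p : exists q, p < q /\ ~ stuttering_position T (pred q) /\
   forall r, p < r < q -> stuttering_position T (pred r).
Proof.
  assert (Ex : exists q, p < q /\ ~ stuttering_position T (pred q)).
  { apply NNPP; intro N.
    assert (All : forall r, p <= r -> stuttering_position T r).
    { intros r Hr. apply NNPP; intro C. apply N. exists (S r). split; [lia|exact C]. }
    destruct (All p (le_n p)) as [_ [t [j [Ht [Hj D]]]]].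
    assert (Cst : forall n, t (p + n) = t p).
    { induction n. rewrite Nat.add_0_r; reflexivity.
      rewrite <- IHn. destruct (All (p+n) ltac:(lia)) as [A _].
      replace (p + S n) with (S (p+n)) by lia. symmetry; apply A; auto. }
    apply D. replace j with (p + (j - p)) by lia. symmetry; apply Cst. }
  destruct (min_ex _ Ex) as [q [[Hq1 Hq2] Hmin]].
  exists q. split; [exact Hq1|split; [exact Hq2|]].
  intros r Hr. apply NNPP; intro C. apply (Hmin r); [lia|]. split; [lia|exact C].
Qed.

Definition next {AP} (T : team AP) p := proj1_sig (constructive_indefinite_description _ (ex_next T p)).

Lemma next_spec {AP} (T : team AP) p : p < next T p /\ ~ stuttering_position T (pred (next T p)) /\
  forall r, p < r < next T p -> stuttering_position T (pred r).
Proof. unfold next. destruct (constructive_indefinite_description _ _) as [q Hq]. simpl. exact Hq. Qed.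

Fixpoint canon {AP} (T : team AP) k := match k with 0 => 0 | S k => next T (canon T k) end.

Lemma canon_stutter {AP} (T : team AP) : team_stuttering_fun T (canon T).
Proof.
  assert (St : forall n, canon T n < canon T (S n)) by (intro; apply next_spec).
  intros t Ht. split; [reflexivity|split].
  - intros m n; induction n; intro H; [lia|].
    destruct (Nat.eq_dec m n); [subst; apply St|].
    specialize (IHn ltac:(lia)); pose proof (St n); lia.
  - intros k i Hi. change (canon T (S k)) with (next T (canon T k)) in Hi.
    destruct (next_spec T (canon T k)) as [_ [_ Hr]].
    replace i with (canon T k + (i - canon T k)) by lia.
    assert (forall n, canon T k + n < next T (canon T k) -> t (canon T k + n) = t (canon T k)).
    { induction n; intros Hn. rewrite Nat.add_0_r; reflexivity.
      rewrite <- IHn by lia. destruct (Hr (canon T k + S n) ltac:(lia)) as [A _].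
      replace (pred (canon T k + S n)) with (canon T k + n) in A by lia.
      replace (canon T k + S n) with (S (canon T k + n)) by lia. symmetry; apply A; auto. }
    apply H; lia.
Qed.

Lemma canon_free {AP} (T : team AP) : stutter_free (team_sub T (canon T)).
Proof.
  intros k [H1 [u [j [[t [Ht ->]] [Hj D]]]]].
  unfold trace_sub in D.
  destruct (canon_stutter T t Ht) as [c0 [cm cb]].
  destruct (next_spec T (canon T k)) as [Hlt [Hnot _]].
  change (next T (canon T k)) with (canon T (S k)) in Hlt, Hnot.
  set (p := pred (canon T (S k))) in *.
  assert (Ep : S p = canon T (S k)) by (unfold p; lia).
  assert (Hp : canon T k <= p) by (unfold p; lia).
  clearbody p.
  assert (A : forall t', T t' -> t' p = t' (S p)).
  { intros t' Ht'. destruct (canon_stutter T t' Ht') as [_ [_ cb']].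
    rewrite Ep. rewrite (cb' k p ltac:(lia)).
    exact (H1 (trace_sub t' (canon T)) (ex_intro _ t' (conj Ht' eq_refl))). }
  assert (B : t p = t (canon T j)).
  { apply NNPP; intro C. apply Hnot. split; [exact A|]. exists t, (canon T j). split; [exact Ht|split; [|exact C]].
    rewrite Ep. apply cm. exact Hj. }
  apply D. rewrite <- B. symmetry. apply cb. lia.
Qed.

Theorem mainTheorem6 (AP : Type) :
  (* (1) *)
  (forall (T : team AP), stutter_free T ->
     forall f, team_stuttering_fun T f -> T = team_sub T f) /\
  (* (2) *)
  (forall (T : team AP), exists! T' : team AP, stutter_free T' /\ stutter_equiv T T') /\
  (* (3) *)
  ((forall (T : team AP), stutter_equiv T T) /\
   (forall (T T' : team AP), stutter_equiv T T' -> stutter_equiv T' T) /\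
   (forall (T T' T'' : team AP), stutter_equiv T T' -> stutter_equiv T' T'' ->
      stutter_equiv T T'')) /\
  (* (4): the class {T' | T' ==st T} contains exactly one stutter-free team *)
  (forall (T : team AP), exists! T' : team AP, stutter_equiv T' T /\ stutter_free T').
Proof.
  assert (P1 := @sf_fix AP).
  assert (Refl : forall T : team AP, stutter_equiv T T).
  { intro T. exists (fun k => k), (fun k => k). split; [apply id_stutter|split; [apply id_stutter|reflexivity]]. }
  assert (Sym : forall T T' : team AP, stutter_equiv T T' -> stutter_equiv T' T).
  { intros T T' [f [f' [H1 [H2 H3]]]]. exists f', f. auto. }
  assert (Norm : forall T : team AP, stutter_equiv T (team_sub T (canon T))).
  { intro T. exists (canon T), (fun k => k). split; [apply canon_stutter|split; [apply id_stutter|]].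
    rewrite sub_id. reflexivity. }
  assert (Uniq : forall T T' : team AP, stutter_free T' -> stutter_equiv T T' -> T' = team_sub T (canon T)).
  { intros T T' F [f [f' [H1 [H2 H3]]]].
    rewrite <- (P1 T' F f' H2) in H3. subst T'.
    apply red_unique; auto. apply canon_stutter. apply canon_free. }
  assert (Trans : forall T T' T'' : team AP, stutter_equiv T T' -> stutter_equiv T' T'' -> stutter_equiv T T'').
  { intros T T' T'' [f [f' [Hf [Hf' E1]]]] [g' [g'' [Hg' [Hg'' E2]]]].
    pose proof (canon_stutter (team_sub T f)) as Sh1.
    pose proof (canon_free (team_sub T f)) as Fh1.
    pose proof (canon_stutter (team_sub T' g')) as Sh2.
    pose proof (canon_free (team_sub T' g')) as Fh2.
    remember (canon (team_sub T f)) as h1 eqn:Eh1.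
    remember (canon (team_sub T' g')) as h2 eqn:Eh2.
    clear Eh1 Eh2.
    exists (fun k => f (h1 k)), (fun k => g'' (h2 k)).
    split; [apply comp_stutter; auto|].
    split; [apply comp_stutter; auto; rewrite <- E2; exact Sh2|].
    rewrite <- (sub_sub T f h1), <- (sub_sub T'' g'' h2).
    rewrite E1, <- E2. rewrite E1 in Sh1, Fh1.
    rewrite !sub_sub. apply red_unique.
    - apply comp_stutter; auto.
    - apply comp_stutter; auto.
    - rewrite <- sub_sub; exact Fh1.
    - rewrite <- sub_sub; exact Fh2. }
  split; [exact P1|].
  split.
  { intro T. exists (team_sub T (canon T)). split. split; [apply canon_free|apply Norm].
    intros T' [F E]. symmetry; apply Uniq; auto. }
  split; [split; [exact Refl|split; [exact Sym|exact Trans]]|].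
  intro T. exists (team_sub T (canon T)). split. split; [apply Sym, Norm|apply canon_free].
  intros T' [E F]. symmetry. apply Uniq; auto.
Qed.
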